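(* Let $T_{26}=\mathbf{e}^1_1\otimes(\mathbf{e}^2_1\otimes\mathbf{e}^3_1+\mathbf{e}^2_2\otimes\mathbf{e}^3_3+\mathbf{e}^2_3\otimes\mathbf{e}^3_5)+\mathbf{e}^1_2\otimes(\mathbf{e}^2_1\otimes\mathbf{e}^3_2+\mathbf{e}^2_2\otimes\mathbf{e}^3_4+\mathbf{e}^2_3\otimes\mathbf{e}^3_6)\in\mathbb{C}^2\otimes\mathbb{C}^3\otimes\mathbb{C}^6$ and $g(\mathbf{x},\mathbf{y},\mathbf{z})=x_1y_1z_1+x_2y_1z_2+x_1y_2z_3+x_2y_2z_4+x_1y_3z_5+x_2y_3z_6$. Let $T\in\mathbb{C}^2\otimes\mathbb{C}^3\otimes\mathbb{C}^6$ and $(A,B,C)\in\mathrm{GL}_2\times\mathrm{GL}_3\times\mathrm{GL}_6$ with $(A,B,C)\cdot T=T_{26}$. Then a rank-one tensor $\mathbf{a}\otimes\mathbf{b}\otimes\mathbf{c}$ lies in the forbidden locus of $T$ if and only if $g(A\mathbf{a},B\mathbf{b},C\mathbf{c})=0$ (equivalently $\langle (A^T\otimes B^T\otimes C^T)\cdot T_{26}^*,\mathbf{a}\otimes\mathbf{b}\otimes\mathbf{c}\rangle=0$, where $T_{26}^*$ is $T_{26}$ written in the dual basis).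
   Context: $\mathbf{e}^i_j$ is the $j$-th standard basis vector of the $i$-th factor. The group acts by $(A,B,C)\cdot(\mathbf{a}\otimes\mathbf{b}\otimes\mathbf{c})=A\mathbf{a}\otimes B\mathbf{b}\otimes C\mathbf{c}$, extended linearly. The rank of a tensor is the minimal number of rank-one tensors summing to it; $P$ is in the forbidden locus of $T$ if $\mathrm{rk}(T-\lambda P)\ge\mathrm{rk}(T)$ for all $\lambda\in\mathbb{C}$. (Here $\mathrm{rk}(T)=6$.) *)

(* Defs.v *)
(* The complex numbers are modelled as R[i] := complex R
   (mathcomp-real-closed) for an arbitrary R : realType (MathComp-Analysis),
   i.e. the genuine field C (every realType is a complete ordered field). *)
From HB Require Import structures.
From mathcomp Require Import all_boot all_order all_algebra.
From mathcomp Require Import boolp reals.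
From mathcomp Require Export complex.
Set Implicit Arguments. Unset Strict Implicit. Unset Printing Implicit Defensive.
Import Order.TTheory GRing.Theory Num.Theory.
Local Open Scope ring_scope.

Notation tensor K n1 n2 n3 := {ffun 'I_n1 * 'I_n2 * 'I_n3 -> K}.

Section Tensors.
Variable K : fieldType.


Definition outer n1 n2 n3 (a : 'cV[K]_n1) (b : 'cV[K]_n2) (c : 'cV[K]_n3)
  : tensor K n1 n2 n3 := [ffun x => a x.1.1 0 * b x.1.2 0 * c x.2 0].

Definition rank_le n1 n2 n3 (T : tensor K n1 n2 n3) (r : nat) : Prop :=
  exists (a : 'I_r -> 'cV[K]_n1) (b : 'I_r -> 'cV[K]_n2) (c : 'I_r -> 'cV[K]_n3),
    T = \sum_(l < r) outer (a l) (b l) (c l).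

Lemma rank_exists n1 n2 n3 (T : tensor K n1 n2 n3) : exists r, rank_le T r.
Proof.
pose F (x : 'I_n1 * 'I_n2 * 'I_n3) :=
  outer (T x *: delta_mx x.1.1 0) (delta_mx x.1.2 0) (delta_mx x.2 0).
have HT : T = \sum_x F x.
  apply/ffunP => y; rewrite sum_ffunE (bigD1 y) //= big1 ?addr0.
    rewrite /F ffunE !mxE !eqxx /= !mulr1; by case: y.
  move=> x /negPf nxy; rewrite /F ffunE !mxE /=.
  case: x y nxy => [[i j] k] [[i' j'] k'] /= nxy.
  have [ei|ni] := eqVneq i i'; last by rewrite !mulr0 !mul0r.
  have [ej|nj] := eqVneq j j'; last by rewrite !mulr0 !mul0r.
  have [ek|nk] := eqVneq k k'; last by rewrite !mulr0.
  by subst; rewrite eqxx in nxy.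
exists #|{: 'I_n1 * 'I_n2 * 'I_n3}|.
exists (fun l => T (enum_val l) *: delta_mx (enum_val l).1.1 0).
exists (fun l => delta_mx (enum_val l).1.2 0).
exists (fun l => delta_mx (enum_val l).2 0).
rewrite {1}HT (reindex (@enum_val _ (pred_of_simpl predT))) //=.
by exists (fun x => enum_rank x) => x _; rewrite ?enum_valK ?enum_rankK.
Qed.


Lemma rank_existsb n1 n2 n3 (T : tensor K n1 n2 n3) :
  exists r, `[< rank_le T r >].
Proof. by have [r Hr] := rank_exists T; exists r; apply/asboolP. Qed.

Definition trank n1 n2 n3 (T : tensor K n1 n2 n3) : nat := ex_minn (rank_existsb T).

Definition forbidden n1 n2 n3 (T P : tensor K n1 n2 n3) : Prop :=
  forall lam : K, (trank T <= trank [ffun x => (T x - lam * P x)%R])%N.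

(* action of (A,B,C) : (A,B,C).(a (x) b (x) c) = Aa (x) Bb (x) Cc, extended linearly *)
Definition act n1 n2 n3 (A : 'M[K]_n1) (B : 'M[K]_n2) (C : 'M[K]_n3)
  (T : tensor K n1 n2 n3) : tensor K n1 n2 n3 :=
  [ffun x => \sum_(i < n1) \sum_(j < n2) \sum_(k < n3)
               A x.1.1 i * B x.1.2 j * C x.2 k * T (i, j, k)].

(* standard basis vector e_i of K^n, 1-based index as in the paper *)
Definition ev n (i : nat) : 'cV[K]_n := \col_(j < n) ((j.+1 == i)%:R).

(* i-th coordinate (1-based) of a vector *)
Definition coord1 n (v : 'cV[K]_n.+1) (i : nat) : K := v (inord i.-1) 0.

Definition T26 : tensor K 2 3 6 :=
  outer (ev 2 1) (ev 3 1) (ev 6 1) + outer (ev 2 1) (ev 3 2) (ev 6 3)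
  + outer (ev 2 1) (ev 3 3) (ev 6 5)
  + outer (ev 2 2) (ev 3 1) (ev 6 2) + outer (ev 2 2) (ev 3 2) (ev 6 4)
  + outer (ev 2 2) (ev 3 3) (ev 6 6).

Definition g26 (x : 'cV[K]_2) (y : 'cV[K]_3) (z : 'cV[K]_6) : K :=
  let x_ := coord1 x in let y_ := coord1 y in let z_ := coord1 z in
  x_ 1 * y_ 1 * z_ 1 + x_ 2 * y_ 1 * z_ 2 + x_ 1 * y_ 2 * z_ 3
  + x_ 2 * y_ 2 * z_ 4 + x_ 1 * y_ 3 * z_ 5 + x_ 2 * y_ 3 * z_ 6.
End Tensors.

(* Main.v *)
Require Import Defs.
From HB Require Import structures.
From mathcomp Require Import all_boot all_order all_algebra.
From mathcomp Require Import boolp reals complex.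
From mathcomp Require Import ring zify.
Import Order.TTheory GRing.Theory Num.Theory.
Local Open Scope ring_scope.
Set Implicit Arguments. Unset Strict Implicit. Unset Printing Implicit Defensive.


Section Gen.
Variable K : fieldType.

Lemma act_lin n1 n2 n3 (A : 'M[K]_n1) (B : 'M[K]_n2) (C : 'M[K]_n3) (s : K)
  (X Y : tensor K n1 n2 n3) :
  act A B C [ffun x => s * X x + Y x] = [ffun x => s * act A B C X x + act A B C Y x].
Proof.
apply/ffunP => x; rewrite !ffunE big_distrr -big_split; apply: eq_bigr => i _ /=.
rewrite big_distrr -big_split; apply: eq_bigr => j _ /=.
rewrite big_distrr -big_split; apply: eq_bigr => k _ /=.
by rewrite ffunE; ring.
Qed.

Lemma act0 n1 n2 n3 (A : 'M[K]_n1) (B : 'M[K]_n2) (C : 'M[K]_n3) :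
  act A B C 0 = 0.
Proof.
apply/ffunP => x; rewrite !ffunE big1 // => i _; rewrite big1 // => j _.
by rewrite big1 // => k _; rewrite ffunE mulr0.
Qed.

Lemma actD n1 n2 n3 (A : 'M[K]_n1) (B : 'M[K]_n2) (C : 'M[K]_n3) X Y :
  act A B C (X + Y) = act A B C X + act A B C Y.
Proof.
have -> : X + Y = [ffun x => 1 * X x + Y x] by apply/ffunP => x; rewrite !ffunE mul1r.
by rewrite act_lin; apply/ffunP => x; rewrite !ffunE mul1r.
Qed.

Lemma act_sum n1 n2 n3 (A : 'M[K]_n1) (B : 'M[K]_n2) (C : 'M[K]_n3) r
  (X : 'I_r -> tensor K n1 n2 n3) :
  act A B C (\sum_(l < r) X l) = \sum_(l < r) act A B C (X l).
Proof. exact: (big_morph _ (actD A B C) (act0 A B C)). Qed.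

Lemma act_outer n1 n2 n3 (A : 'M[K]_n1) (B : 'M[K]_n2) (C : 'M[K]_n3) a b c :
  act A B C (outer a b c) = outer (A *m a) (B *m b) (C *m c).
Proof.
apply/ffunP => x; rewrite !ffunE !mxE -mulrA big_distrl /=; apply: eq_bigr => i _.
rewrite big_distrl /= big_distrr /=; apply: eq_bigr => j _.
rewrite !big_distrr /=; apply: eq_bigr => k _.
by rewrite ffunE /=; ring.
Qed.

Lemma tensor_basis n1 n2 n3 (T : tensor K n1 n2 n3) :
  T = \sum_x outer (T x *: delta_mx x.1.1 0) (delta_mx x.1.2 0) (delta_mx x.2 0).
Proof.
apply/ffunP => y; rewrite sum_ffunE (bigD1 y) //= big1 ?addr0.
  rewrite ffunE !mxE !eqxx /= !mulr1; by case: y.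
move=> x /negPf nxy; rewrite ffunE !mxE /=.
case: x y nxy => [[i j] k] [[i' j'] k'] /= nxy.
have [ei|ni] := eqVneq i i'; last by rewrite !mulr0 !mul0r.
have [ej|nj] := eqVneq j j'; last by rewrite !mulr0 !mul0r.
have [ek|nk] := eqVneq k k'; last by rewrite !mulr0.
by subst; rewrite eqxx in nxy.
Qed.

Lemma act_sumT n1 n2 n3 (A : 'M[K]_n1) (B : 'M[K]_n2) (C : 'M[K]_n3) (I : finType)
  (X : I -> tensor K n1 n2 n3) :
  act A B C (\sum_(l : I) X l) = \sum_(l : I) act A B C (X l).
Proof. exact: (big_morph _ (actD A B C) (act0 A B C)). Qed.

Lemma act_comp n1 n2 n3 (A A' : 'M[K]_n1) (B B' : 'M[K]_n2) (C C' : 'M[K]_n3) X :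
  act A' B' C' (act A B C X) = act (A' *m A) (B' *m B) (C' *m C) X.
Proof.
rewrite (tensor_basis X) !act_sumT.
by apply: eq_bigr => y _; rewrite !act_outer !mulmxA.
Qed.

Lemma act1 n1 n2 n3 (X : tensor K n1 n2 n3) : act 1%:M 1%:M 1%:M X = X.
Proof.
symmetry; rewrite {2}(tensor_basis X) act_sumT {1}(tensor_basis X).
by apply: eq_bigr => y _; rewrite act_outer !mul1mx.
Qed.

Lemma rank_le_act n1 n2 n3 (A : 'M[K]_n1) (B : 'M[K]_n2) (C : 'M[K]_n3) X r :
  rank_le X r -> rank_le (act A B C X) r.
Proof.
case=> a [b [c ->]]; exists (fun l => A *m a l), (fun l => B *m b l), (fun l => C *m c l).
by rewrite act_sum; apply: eq_bigr => l _; rewrite act_outer.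
Qed.

Lemma rank_pad n1 n2 n3 (X : tensor K n1 n2 n3) r s :
  rank_le X r -> (r <= s)%N -> rank_le X s.
Proof.
case=> a [b [c ->]] rs.
exists (fun l : 'I_s => oapp a 0 (insub (val l))),
       (fun l : 'I_s => oapp b 0 (insub (val l))),
       (fun l : 'I_s => oapp c 0 (insub (val l))).
pose G (i : nat) := oapp (fun l => outer (a l) (b l) (c l)) 0 (insub i).
transitivity (\sum_(l < r) G l); first by apply: eq_bigr => l _; rewrite /G valK.
rewrite (big_ord_widen _ G rs) big_mkcond /=; apply: eq_bigr => l _; rewrite /G.
case: insubP => [u ul ue|nl]; rewrite ?ul //=.
by rewrite (negPf nl); apply/ffunP => x; rewrite !ffunE !mxE !mul0r.
Qed.

Lemma trank_le n1 n2 n3 (X : tensor K n1 n2 n3) r : rank_le X r -> (trank X <= r)%N.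
Proof. by rewrite /trank; case: ex_minnP => m _ H Hr; apply: H; apply/asboolP. Qed.

Lemma trank_spec n1 n2 n3 (X : tensor K n1 n2 n3) : rank_le X (trank X).
Proof. by rewrite /trank; case: ex_minnP => m /asboolP. Qed.

End Gen.



Definition pi1 (k : 'I_6) : 'I_2 := inord (k %% 2).
Definition pi2 (k : 'I_6) : 'I_3 := inord (k %/ 2).
Definition pidx (i : 'I_2) (j : 'I_3) : 'I_6 := inord (i + 2 * j).

Lemma pidxK k : pidx (pi1 k) (pi2 k) = k.
Proof.
by case: k => [[|[|[|[|[|[|//]]]]]] ?]; apply/val_inj; rewrite /= !inordK.
Qed.
Lemma pi1K i j : pi1 (pidx i j) = i.
Proof.
by case: i => [[|[|//]] ?]; case: j => [[|[|[|//]]] ?]; apply/val_inj; rewrite /= !inordK.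
Qed.
Lemma pi2K i j : pi2 (pidx i j) = j.
Proof.
by case: i => [[|[|//]] ?]; case: j => [[|[|[|//]]] ?]; apply/val_inj; rewrite /= !inordK.
Qed.

Section Flat.
Variable K : fieldType.

Definition vv (p : 'cV[K]_2) (q : 'cV[K]_3) : 'rV[K]_6 :=
  \row_k (p (pi1 k) 0 * q (pi2 k) 0).
Definition flat (X : tensor K 2 3 6) : 'M[K]_6 :=
  \matrix_(k, k') X (pi1 k', pi2 k', k).

Lemma flatE (X : tensor K 2 3 6) i j k : X (i, j, k) = flat X k (pidx i j).
Proof. by rewrite mxE pi1K pi2K. Qed.

Lemma flat_rank (X : tensor K 2 3 6) r : rank_le X r -> (\rank (flat X) <= r)%N.
Proof.
case=> a [b [c ->]].
pose Cm : 'M[K]_(6, r) := \matrix_(k, l) c l k 0.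
pose Vm : 'M[K]_(r, 6) := \matrix_(l, k') (vv (a l) (b l)) 0 k'.
have -> : flat (\sum_(l < r) outer (a l) (b l) (c l)) = Cm *m Vm.
  apply/matrixP => k k'; rewrite !mxE sum_ffunE; apply: eq_bigr => l _.
  by rewrite !mxE ffunE /=; ring.
exact: leq_trans (mxrankM_maxl _ _) (rank_leq_col _).
Qed.

Lemma upper m (p : 'I_m -> 'cV[K]_2) (q : 'I_m -> 'cV[K]_3) (X : tensor K 2 3 6) :
  let F := \matrix_(l, k') (vv (p l) (q l)) 0 k' in
  (flat X <= F)%MS -> rank_le X (\rank F).
Proof.
move=> F sXF.
pose f := maxrankfun F; pose G := rowsub f F.
have sXG : (flat X <= G)%MS.
  by apply: submx_trans sXF _; rewrite (eq_maxrowsub F).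
pose Y := flat X *m pinvmx G.
have eY : Y *m G = flat X by rewrite mulmxKpV.
exists (fun l => p (f l)), (fun l => q (f l)), (fun l => col l Y).
apply/ffunP => [[[i j] k]]; rewrite sum_ffunE flatE -eY mxE.
apply: eq_bigr => l _; rewrite !mxE ffunE /= !mxE pi1K pi2K; ring.
Qed.

End Flat.



Section Five.
Variable K : fieldType.
Variables (a : 'cV[K]_2) (b : 'cV[K]_3) (c : 'cV[K]_6).
Definition bil (p : 'cV[K]_2) (q : 'cV[K]_3) : K := (vv p q *m c) 0 0.
Let gam := bil a b.
Hypothesis gam0 : gam != 0.

Let e2 (i : 'I_2) : 'cV[K]_2 := delta_mx i 0.
Let e3 (j : 'I_3) : 'cV[K]_3 := delta_mx j 0.
Let rr j := bil a (e3 j).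
Let uu i := bil (e2 i) b.
Let x0 : 'cV[K]_2 := - uu ord_max *: e2 ord0 + uu ord0 *: e2 ord_max.
Let pp j : 'cV[K]_3 := e3 j - (rr j / gam) *: b.
Let be j := bil x0 (pp j) / gam.

Definition pF (l : 'I_7) : 'cV[K]_2 :=
  if (l < 3)%N then a else if l == 3 :> nat then x0 else x0 + a.
Definition qF (l : 'I_7) : 'cV[K]_3 :=
  if (l < 3)%N then pp (inord l) else if l == 3 :> nat then b
  else pp (inord (l - 4)) - be (inord (l - 4)) *: b.
Definition FF : 'M[K]_(7, 6) := \matrix_(l, k') (vv (pF l) (qF l)) 0 k'.
Definition vab := vv a b.
Definition SS := col_mx FF vab.

Ltac bilt := rewrite /bil !mxE ?big_distrr /= -?sumrB -?big_split /=;
  apply: eq_bigr => k _; rewrite !mxE; ring.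
Lemma bilDl (p1 p2 : 'cV[K]_2) q : bil (p1 + p2) q = bil p1 q + bil p2 q.
Proof. bilt. Qed.
Lemma bilZl s (p : 'cV[K]_2) q : bil (s *: p) q = s * bil p q.
Proof. bilt. Qed.
Lemma bilDr p (q1 q2 : 'cV[K]_3) : bil p (q1 + q2) = bil p q1 + bil p q2.
Proof. bilt. Qed.
Lemma bilBr s p (q1 q2 : 'cV[K]_3) : bil p (q1 - s *: q2) = bil p q1 - s * bil p q2.
Proof. bilt. Qed.

Lemma bil_x0b : bil x0 b = 0.
Proof. by rewrite /x0 bilDl !bilZl -/(uu _) -/(uu _); ring. Qed.

Lemma bil_app j : bil a (pp j) = 0.
Proof. rewrite /pp bilBr -/(rr j) -/gam; field; exact: gam0. Qed.

Lemma bil_row l : bil (pF l) (qF l) = 0.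
Proof.
rewrite /pF /qF; case: ifP => _; first exact: bil_app.
case: ifP => _; first exact: bil_x0b.
rewrite /be bilDl !bilBr bil_x0b -/gam /rr; field; exact: gam0.
Qed.

Lemma FFc : FF *m c = 0.
Proof.
apply/matrixP => l i; rewrite ord1.
transitivity (bil (pF l) (qF l)); last by rewrite bil_row mxE.
by rewrite /bil !mxE; apply: eq_bigr => k _; rewrite !mxE.
Qed.

Lemma vabc : vab *m c = gam%:M.
Proof. by apply/matrixP => i j; rewrite !ord1 /gam /bil mxE [in RHS]mxE eqxx mulr1n. Qed.

Let Sp (v : 'rV[K]_6) := (v <= SS)%MS.

Lemma SpD v w : Sp v -> Sp w -> Sp (v + w).
Proof. exact: addmx_sub. Qed.
Lemma SpZ s v : Sp v -> Sp (s *: v).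
Proof. exact: scalemx_sub. Qed.
Lemma SpB s v w : Sp v -> Sp w -> Sp (v - s *: w).
Proof. by move=> Hv Hw; rewrite -scaleNr; apply: SpD => //; apply: SpZ. Qed.

Lemma FF_SS : (FF <= SS)%MS.
Proof. by rewrite /SS -addsmxE addsmxSl. Qed.
Lemma Sp_vab : Sp vab.
Proof. by rewrite /Sp /SS -addsmxE addsmxSr. Qed.
Lemma Sp_row l : Sp (vv (pF l) (qF l)).
Proof.
apply: submx_trans FF_SS; apply: (eq_row_sub l).
by apply/rowP => k; rewrite !mxE.
Qed.

Lemma Sp_app j : Sp (vv a (pp j)).
Proof.
have := Sp_row (inord j); rewrite /pF /qF inordK; last by apply: ltn_trans (ltn_ord j) _.
by rewrite ltn_ord inord_val.
Qed.

Lemma Sp_x0b : Sp (vv x0 b).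
Proof. by have := Sp_row (inord 3); rewrite /pF /qF inordK. Qed.

Lemma Sp_x0p j : Sp (vv x0 (pp j)).
Proof.
have := Sp_row (inord (j + 4)); rewrite /pF /qF inordK; last first.
  by have := ltn_ord j; lia.
have -> : (j + 4 < 3)%N = false by lia.
have -> : ((j + 4)%N == 3) = false by apply/eqP; lia.
rewrite addnK inord_val => H.
have -> : vv x0 (pp j) = vv (x0 + a) (pp j - be j *: b) + be j *: vv x0 b
   - 1 *: vv a (pp j) + be j *: vab.
  by apply/rowP => k; rewrite !mxE; ring.
by apply: SpD; [apply: SpB; [apply: SpD|] |]; rewrite ?Sp_app ?Sp_x0b ?Sp_vab //; apply: SpZ; [apply: Sp_x0b|apply: Sp_vab].
Qed.

Lemma Sp_x0e j : Sp (vv x0 (e3 j)).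
Proof.
have -> : vv x0 (e3 j) = vv x0 (pp j) - (- (rr j / gam)) *: vv x0 b.
  by apply/rowP => k; rewrite !mxE; ring.
by apply: SpB; [apply: Sp_x0p | apply: Sp_x0b].
Qed.

Lemma Sp_ae j : Sp (vv a (e3 j)).
Proof.
have -> : vv a (e3 j) = vv a (pp j) - (- (rr j / gam)) *: vab.
  by apply/rowP => k; rewrite !mxE; ring.
by apply: SpB; [apply: Sp_app | apply: Sp_vab].
Qed.

Lemma gamE : gam = a ord0 0 * uu ord0 + a ord_max 0 * uu ord_max.
Proof.
have Ea : a = a ord0 0 *: e2 ord0 + a ord_max 0 *: e2 ord_max.
  apply/matrixP => i j; rewrite !ord1 /e2 !mxE.
  by case: i => [[|[|//]] ?]; rewrite /= ?mulr1 ?mulr0 ?addr0 ?add0r //; congr (a _ _); apply/val_inj.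
by rewrite /gam {1}Ea bilDl !bilZl.
Qed.

Lemma Sp_pe p j : Sp (vv p (e3 j)).
Proof.
pose s := (p ord0 0 * uu ord0 + p ord_max 0 * uu ord_max) / gam.
pose t := (a ord0 0 * p ord_max 0 - a ord_max 0 * p ord0 0) / gam.
have -> : vv p (e3 j) = vv a (e3 j) - (- s) *: vv a (e3 j) - 1 *: vv a (e3 j) - (- t) *: vv x0 (e3 j).
  apply/rowP => k; rewrite !mxE /s /t.
  case: (pi1 k) => [[|[|//]] Hi] /=; rewrite /x0 ?mxE /=.
    have -> : Ordinal Hi = ord0 by apply/val_inj.
    move: gam0; rewrite /s /t gamE => g0; field => //.
  have -> : Ordinal Hi = ord_max by apply/val_inj.
  move: gam0; rewrite /s /t gamE => g0; field => //.
apply: SpB; [apply: SpB; [apply: SpB|]|]; by rewrite ?Sp_ae ?Sp_x0e.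
Qed.

Lemma Sp_all p q : Sp (vv p q).
Proof.
have -> : vv p q = \sum_(j < 3) q j 0 *: vv p (e3 j).
  apply/rowP => k; rewrite !mxE summxE (bigD1 (pi2 k)) //= big1 => [|j nj].
    by rewrite !mxE !eqxx /=; ring.
  by rewrite !mxE eq_sym (negPf nj) /=; ring.
by apply: summx_sub => j _; apply: SpZ; apply: Sp_pe.
Qed.

Lemma one_SS : (1%:M <= SS)%MS.
Proof.
apply/row_subP => k; rewrite row1.
have -> : delta_mx 0 k = vv (e2 (pi1 k)) (e3 (pi2 k)).
  apply/rowP => k'; rewrite !mxE !eqxx /= -[k in k' == k]pidxK.
  case: (eqVneq k' (pidx (pi1 k) (pi2 k))) => [->|nk]; rewrite ?pi1K ?pi2K ?eqxx ?mulr1 //.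
  case: (eqVneq (pi1 k') (pi1 k)) => e1; last by rewrite /= mul0r.
  case: (eqVneq (pi2 k') (pi2 k)) => e2'; last by rewrite /= mulr0.
  by rewrite -e1 -e2' pidxK eqxx in nk.
exact: Sp_all.
Qed.

Lemma FF_rank : (\rank FF <= 5)%N.
Proof.
have := rank_leq_col FF; rewrite leq_eqVlt => /orP [/eqP h|//].
have : row_full FF by rewrite /row_full h.
case/row_fullP => D hD.
have c0 : c = 0 by rewrite -[c]mul1mx -hD -mulmxA FFc mulmx0.
by move: gam0; rewrite /gam /bil c0 mulmx0 mxE eqxx.
Qed.

Lemma five_main (X : tensor K 2 3 6) :
  flat X = 1%:M - gam^-1 *: (c *m vab) -> rank_le X 5.
Proof.
move=> hX; apply: (rank_pad _ FF_rank); apply: upper; rewrite -/FF hX.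
set Pi := _ - _.
have FP : FF *m Pi = FF by rewrite mulmxBr mulmx1 -scalemxAr mulmxA FFc mul0mx scaler0 subr0.
have vP : vab *m Pi = 0.
  by rewrite mulmxBr mulmx1 -scalemxAr mulmxA vabc mul_scalar_mx scalerA mulVf // scale1r subrr.
have : (1%:M *m Pi <= SS *m Pi)%MS by apply: submxMr; apply: one_SS.
rewrite mul1mx /SS mul_col_mx FP vP => H; apply: submx_trans H _.
by rewrite col_mx_sub submx_refl sub0mx.
Qed.

End Five.



Section Fin.
Variable K : fieldType.

Lemma g26E (x : 'cV[K]_2) (y : 'cV[K]_3) (z : 'cV[K]_6) :
  g26 x y z = (vv x y *m z) 0 0.
Proof.
rewrite /g26 /coord1 mxE !big_ord_recl big_ord0 addr0 !mxE !addrA.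
congr (_ + _ + _ + _ + _ + _); congr (_ * _ * _); congr (_ _ 0);
  by apply/val_inj; rewrite /= /pi1 /pi2 ?inordK.
Qed.

Lemma flat_T26 : flat (T26 K) = 1%:M.
Proof.
apply/matrixP => k k'; rewrite !mxE /T26 !ffunE /= /ev !mxE /pi1 /pi2.
case: k => [[|[|[|[|[|[|//]]]]]] Hk]; case: k' => [[|[|[|[|[|[|//]]]]]] Hk'];
 rewrite /= !inordK //= -!natrM -!natrD !(mul1n, muln1, mul0n, muln0, addn0, add0n) ?mulr1n ?mulr0n //.
Qed.

Lemma flat_diff (X Y : tensor K 2 3 6) lam :
  flat [ffun x => X x - lam * Y x] = flat X - lam *: flat Y.
Proof. by apply/matrixP => k k'; rewrite !mxE ffunE. Qed.

Lemma flat_outer p q (z : 'cV[K]_6) : flat (outer p q z) = z *m vv p q.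
Proof. by apply/matrixP => k k'; rewrite !mxE big_ord1 !mxE ffunE /=; ring. Qed.

Lemma vv_delta k :
  vv (delta_mx (pi1 k) 0) (delta_mx (pi2 k) 0) = delta_mx 0 k :> 'rV[K]_6.
Proof.
apply/rowP => k'; rewrite !mxE !eqxx /= -[k in k' == k]pidxK.
case: (eqVneq k' (pidx (pi1 k) (pi2 k))) => [->|nk]; rewrite ?pi1K ?pi2K ?eqxx ?mulr1 //.
case: (eqVneq (pi1 k') (pi1 k)) => e1; last by rewrite /= mul0r.
case: (eqVneq (pi2 k') (pi2 k)) => e2'; last by rewrite /= mulr0.
by rewrite -e1 -e2' pidxK eqxx in nk.
Qed.

Lemma rank_le6 (X : tensor K 2 3 6) : rank_le X 6.
Proof.
pose p (l : 'I_6) : 'cV[K]_2 := delta_mx (pi1 l) 0.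
pose q (l : 'I_6) : 'cV[K]_3 := delta_mx (pi2 l) 0.
have HF : \matrix_(l, k') (vv (p l) (q l)) 0 k' = 1%:M.
  by apply/matrixP => l kk; rewrite mxE /p /q vv_delta !mxE eqxx eq_sym.
have := @upper K _ p q X; rewrite /= HF mxrank1; apply; exact: submx1.
Qed.

Lemma rank_low (Z : tensor K 2 3 6) r : flat Z \in unitmx -> rank_le Z r -> (6 <= r)%N.
Proof. by move=> U /flat_rank; rewrite mxrank_unit. Qed.

Lemma trank_act n1 n2 n3 (A : 'M[K]_n1) (B : 'M[K]_n2) (C : 'M[K]_n3) X :
  A \in unitmx -> B \in unitmx -> C \in unitmx -> trank (act A B C X) = trank X.
Proof.
move=> uA uB uC; apply/eqP; rewrite eqn_leq; apply/andP; split.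
  by apply: trank_le; apply: rank_le_act; apply: trank_spec.
apply: trank_le.
have E : X = act (invmx A) (invmx B) (invmx C) (act A B C X).
  by rewrite act_comp !mulVmx // act1.
rewrite {1}E.
by apply: rank_le_act; apply: trank_spec.
Qed.

Lemma act_diff n1 n2 n3 (A : 'M[K]_n1) (B : 'M[K]_n2) (C : 'M[K]_n3) (X Y : tensor K n1 n2 n3) lam :
  act A B C [ffun x => X x - lam * Y x] = [ffun x => act A B C X x - lam * act A B C Y x].
Proof.
have -> : [ffun x => X x - lam * Y x] = [ffun x => (- lam) * Y x + X x].
  by apply/ffunP => x; rewrite !ffunE addrC mulNr.
by rewrite act_lin; apply/ffunP => x; rewrite !ffunE addrC mulNr.
Qed.

Lemma main_gen (T : tensor K 2 3 6) (A : 'M[K]_2) (B : 'M[K]_3) (C : 'M[K]_6) :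
  A \in unitmx -> B \in unitmx -> C \in unitmx ->
  act A B C T = T26 K ->
  forall (a : 'cV[K]_2) (b : 'cV[K]_3) (c : 'cV[K]_6),
    (forbidden T (outer a b c) <-> g26 (A *m a) (B *m b) (C *m c) = 0).
Proof.
move=> uA uB uC hT a b c.
set a' := A *m a; set b' := B *m b; set c' := C *m c.
have key lam : trank [ffun x => T x - lam * outer a b c x]
   = trank [ffun x => T26 K x - lam * outer a' b' c' x].
  by rewrite -(trank_act _ uA uB uC) act_diff hT act_outer.
have kT : trank T = trank (T26 K) by rewrite -(trank_act _ uA uB uC) hT.
have fl lam : flat [ffun x => T26 K x - lam * outer a' b' c' x]
   = 1%:M - lam *: (c' *m vv a' b').
  by rewrite flat_diff flat_T26 flat_outer.
have t26 : trank (T26 K) = 6%N.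
  apply/eqP; rewrite eqn_leq (trank_le (rank_le6 _)) /=.
  apply: (rank_low _ (trank_spec _)); rewrite flat_T26; exact: unitmx1.
rewrite g26E; split.
  move=> hF; apply/eqP; apply/negPn/negP => g0.
  have := hF (bil c' a' b')^-1; rewrite key kT t26.
  have r5 : rank_le [ffun x => T26 K x - (bil c' a' b')^-1 * outer a' b' c' x] 5.
    apply: (five_main g0); by rewrite fl.
  by move/leq_trans/(_ (trank_le r5)).
move=> g0 lam; rewrite key kT t26.
apply: (rank_low _ (trank_spec _)); rewrite fl.
have vc : vv a' b' *m c' = 0 by apply/matrixP => i j; rewrite !ord1 g0 mxE.
suff H : (1%:M - lam *: (c' *m vv a' b')) *m (1%:M + lam *: (c' *m vv a' b')) = 1%:M.
  by case: (mulmx1_unit H).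
rewrite mulmxDr mulmx1 mulmxBl mul1mx -!scalemxAr -!scalemxAl scalerA.
by rewrite mulmxA -(mulmxA c') vc mulmx0 mul0mx scaler0 subr0 addrNK.
Qed.

End Fin.


Unset Implicit Arguments.

Theorem proposition6p16 (R : realType) (T : tensor R[i] 2 3 6)
  (A : 'M[R[i]]_2) (B : 'M[R[i]]_3) (C : 'M[R[i]]_6) :
  A \in unitmx -> B \in unitmx -> C \in unitmx ->
  act A B C T = T26 R[i] ->
  forall (a : 'cV[R[i]]_2) (b : 'cV[R[i]]_3) (c : 'cV[R[i]]_6),
    outer a b c != 0 ->
    (forbidden T (outer a b c) <-> g26 (A *m a) (B *m b) (C *m c) = 0).
Proof.
move=> uA uB uC hT a b c _; exact: main_gen.
Qed.
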